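(* Let $s,t\ge1$ and let $f=(f_1,\dots,f_{t+1}):\Delta^s\to\Delta^t$. If some finite automaton over the alphabet $\{1,\dots,s+1\}$ simulates $f$, then each $f_j$ is a rational function with rational coefficients on $\Delta^s$: there exist $g_j,h_j\in\mathbb Z[x_1,\dots,x_{s+1}]$ with $h_j(p)\neq0$ and $f_j(p)=g_j(p)/h_j(p)$ for all $p\in\Delta^s$.
   Context: $\Delta^s=\{p\in(0,1)^{s+1}:\sum_{i=1}^{s+1}p_i=1\}$ is the open simplex of probability vectors. For a word $w$ over the alphabet $\{1,\dots,s+1\}$ let $n_i(w)$ be the number of occurrences of $i$, and for $p\in\Delta^s$ put $\mathbf P_p[w]=\prod_i p_i^{n_i(w)}$, $\mathbf P_p[L]=\sum_{w\in L}\mathbf P_p[w]$ (the law of i.i.d. letters with distribution $p$). A simulation of $f=(f_1,\dots,f_{t+1}):\Delta^s\to\Delta^t$ is a tuple of pairwise disjoint languages $L_1,\dots,L_{t+1}$ over $\{1,\dots,s+1\}$ whose union is prefix-free (no word is a proper prefix of another) such that $\mathbf P_p[L_j]=f_j(p)$ for all $p\in\Delta^s$ and all $j$. A finite automaton over this alphabet consists of a finite state set $S$, a start state $s_0$, a transition function $\delta:S\times\{1,\dots,s+1\}\to S$ (extended to words), and pairwise disjoint absorbing final-state sets $S_1,\dots,S_{t+1}$; $L_j$ is the set of words $w$ with $\delta(s_0,w)\in S_j$ and no proper prefix of $w$ leading into a final state. The automaton simulates $f$ if $(L_1,\dots,L_{t+1})$ is a simulation of $f$. *)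

(* Defs.v *)
From HB Require Import structures.
From mathcomp Require Import all_boot all_order all_algebra.
From mathcomp Require Import all_classical all_reals.
From mathcomp Require Import esum.
From mathcomp Require mpoly.

Set Implicit Arguments.
Unset Strict Implicit.
Unset Printing Implicit Defensive.

Import Order.TTheory GRing.Theory Num.Theory.
Local Open Scope classical_set_scope.
Local Open Scope ring_scope.

Definition in_simplex (R : realType) (s : nat) (p : 'I_s.+1 -> R) : Prop :=
  (forall i, 0 < p i < 1) /\ \sum_(i < s.+1) p i = 1.

(* Words over the alphabet {1,...,s+1} (encoded as 'I_(s+1)) and languages. *)
Definition word (s : nat) := seq 'I_s.+1.
Definition language (s : nat) := set (word s).

Definition Pword (R : realType) (s : nat) (p : 'I_s.+1 -> R) (w : word s) : R :=
  \prod_(i < s.+1) p i ^+ count_mem i w.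

Definition Plang (R : realType) (s : nat) (p : 'I_s.+1 -> R) (L : language s) : \bar R :=
  \esum_(w in L) (Pword p w)%:E.

Definition prefix_free_union (s t : nat) (L : 'I_t.+1 -> language s) : Prop :=
  forall j k (u v : word s), L j u -> L k v -> prefix u v -> u = v.

Definition simulation (R : realType) (s t : nat)
    (f : ('I_s.+1 -> R) -> 'I_t.+1 -> R) (L : 'I_t.+1 -> language s) : Prop :=
  [/\ (forall j k, j <> k -> L j `&` L k = set0),
      prefix_free_union L &
      forall p, in_simplex p -> forall j, Plang p (L j) = (f p j)%:E].

Record automaton (s t : nat) := Automaton {
  state : finType;
  start : state;
  delta : state -> 'I_s.+1 -> state;
  final : 'I_t.+1 -> {set state};
  final_disjoint : forall j k, j <> k -> final j :&: final k = finset.set0;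
  final_absorbing : forall j q a, q \in final j -> delta q a \in final j
}.

Definition delta_word (s t : nat) (A : automaton s t) (q : state A) (w : word s) : state A :=
  foldl (@delta s t A) q w.

Definition is_final (s t : nat) (A : automaton s t) (q : state A) : bool :=
  [exists j, q \in final A j].

Definition aut_lang (s t : nat) (A : automaton s t) (j : 'I_t.+1) : language s :=
  [set w | (delta_word (start A) w \in final A j) /\
           (forall k, (k < size w)%N -> ~~ is_final (delta_word (start A) (take k w)))].

Definition aut_simulates (R : realType) (s t : nat) (A : automaton s t)
    (f : ('I_s.+1 -> R) -> 'I_t.+1 -> R) : Prop :=
  simulation f (aut_lang A).

Definition zeval (R : realType) (n : nat) (g : mpoly.mpoly n int) (p : 'I_n -> R) : R :=
  mpoly.mmap (fun z : int => z%:~R) p g.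

(* Main.v *)
Require Import Defs.
From HB Require Import structures.
From mathcomp Require Import all_boot all_order all_algebra.
From mathcomp Require Import ring lra.
From mathcomp Require Import mpoly.
From mathcomp Require Import all_classical all_reals.
From mathcomp Require Import ereal esum.
Import Order.TTheory GRing.Theory Num.Theory.
Local Open Scope classical_set_scope.
Local Open Scope ring_scope.

Set Implicit Arguments.
Unset Strict Implicit.
Unset Printing Implicit Defensive.

Lemma esumZ (R : realType) (T : choiceType) (S : set T) (a : T -> \bar R) (r : R) :
  0 < r -> (forall x, 0 <= a x)%E ->
  (\esum_(x in S) (r%:E * a x) = r%:E * \esum_(x in S) a x)%E.
Proof.
move=> r0 a0; rewrite /esum -ereal_sup_pZl//; congr ereal_sup.
rewrite image_comp; apply: eq_imagel => A _ /=.
by rewrite ge0_mule_fsumr.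
Qed.

Lemma esum_finT (R : realType) (T : finType) (a : T -> \bar R) :
  (forall x, 0 <= a x)%E ->
  (\esum_(x in [set: T]) a x = \sum_(x : T) a x)%E.
Proof.
move=> a0; rewrite esum_fset; last by move=> *; apply: a0.
  rewrite (fsbigE (enum T)) ?enum_uniq//.
  - by rewrite big_enum_cond /=; apply: eq_bigl => x; rewrite in_setT.
  - by move=> x _ ; rewrite mem_enum.
exact: finite_finset.
Qed.
Definition Lq (s t : nat) (A : automaton s t) (j : 'I_t.+1) (q : state A) : language s :=
  [set w | (delta_word q w \in final A j) /\
           (forall k, (k < size w)%N -> ~~ is_final (delta_word q (take k w)))].
Arguments Lq {s t} A j q.

Definition X (R : realType) (s t : nat) (A : automaton s t) (j : 'I_t.+1)
  (p : 'I_s.+1 -> R) (q : state A) : \bar R := Plang p (Lq A j q).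
Arguments X {R s t} A j p q.

Lemma Pword_cons (R : realType) s (p : 'I_s.+1 -> R) a (w : word s) :
  Pword p (a :: w) = p a * Pword p w.
Proof.
rewrite /Pword /=.
rewrite (eq_bigr (fun i => p i ^+ (a == i) * p i ^+ count_mem i w)); last first.
  by move=> i _; rewrite exprD.
rewrite big_split /=; congr (_ * _).
rewrite (bigD1 a) //= eqxx expr1 big1 ?mulr1 // => i ia.
by rewrite eq_sym (negbTE ia).
Qed.

Lemma Pword_nil (R : realType) s (p : 'I_s.+1 -> R) : Pword p [::] = 1.
Proof. by rewrite /Pword big1. Qed.

Lemma Pword_gt0 (R : realType) s (p : 'I_s.+1 -> R) (w : word s) :
  (forall i, 0 < p i) -> 0 < Pword p w.
Proof. by move=> hp; rewrite /Pword; apply: prodr_gt0 => i _; apply: exprn_gt0. Qed.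

Lemma is_finalP s t (A : automaton s t) j (q : state A) : q \in final A j -> is_final q.
Proof. by move=> h; apply/existsP; exists j. Qed.

Lemma Lq_cons s t (A : automaton s t) j (q : state A) : ~~ is_final q ->
  Lq A j q = (fun x => x.1 :: x.2) @` ([set: 'I_s.+1] `*`` (fun a => Lq A j (delta q a))).
Proof.
move=> nf; apply/seteqP; split.
- move=> [|a w] [hF hk].
    by move: nf; rewrite (is_finalP hF).
  exists (a, w) => //; split => //=; split => // k hk'.
  exact: (hk k.+1).
- move=> _ [[a w] [_ [hF hk]] <-] /=; split => //.
  by case=> [|k] //= hk'; apply: hk.
Qed.

Lemma X_cons (R : realType) s t (A : automaton s t) j (p : 'I_s.+1 -> R) (q : state A) :
  (forall i, 0 < p i) -> ~~ is_final q ->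
  X A j p q = (\sum_a (p a)%:E * X A j p (delta q a))%E.
Proof.
move=> hp nf; rewrite /X /Plang Lq_cons //.
rewrite esum_image; last first.
  by move=> [a w] [b v] _ _ /= [-> ->].
rewrite -(@esum_esum R _ _ [set: 'I_s.+1] (fun a => Lq A j (delta q a)) (fun a w => (Pword p (a :: w))%:E)); last first.
  by move=> a w _ _; rewrite lee_fin ltW // Pword_gt0.
rewrite esum_finT; last first.
  by move=> a; apply: esum_ge0 => w _; rewrite lee_fin ltW // Pword_gt0.
apply: eq_bigr => a _.
under eq_esum do rewrite Pword_cons EFinM.
rewrite esumZ //.
by move=> w; rewrite lee_fin ltW // Pword_gt0.
Qed.

Lemma X_final (R : realType) s t (A : automaton s t) j (p : 'I_s.+1 -> R) (q : state A) :
  is_final q -> X A j p q = ((q \in final A j)%:R)%:E.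
Proof.
move=> fq; rewrite /X /Plang.
have nonnil : forall w, Lq A j q w -> w = [::].
  by move=> [|a w] // [_ hk]; move: (hk 0%N isT) => /=; rewrite fq.
have [hF|hF] := boolP (q \in final A j); rewrite ?hF ?(negbTE hF).
  rewrite (_ : Lq A j q = [set [::]]).
    by rewrite esum_set1 ?Pword_nil // lee_fin ler01.
  apply/seteqP; split => w; first by move/nonnil.
  by move=> /= ->; split.
rewrite (_ : Lq A j q = set0) ?esum_set0 //.
apply/seteqP; split => // w hw; have := nonnil _ hw => wE; move: hw; rewrite wE.
by move=> [hF' _]; move: hF; rewrite hF'.
Qed.

Lemma delta_word_cons s t (A : automaton s t) (q : state A) a w :
  delta_word q (a :: w) = delta_word (delta q a) w.
Proof. by []. Qed.

Lemma X_ge0 (R : realType) s t (A : automaton s t) j (p : 'I_s.+1 -> R) q :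
  (forall i, 0 < p i) -> (0 <= X A j p q)%E.
Proof.
by move=> hp; apply: esum_ge0 => w _; rewrite lee_fin ltW // Pword_gt0.
Qed.

Lemma X_path (R : realType) s t (A : automaton s t) j (p : 'I_s.+1 -> R) :
  (forall i, 0 < p i) -> forall (u : word s) (q0 : state A),
  (forall k, (k < size u)%N -> ~~ is_final (delta_word q0 (take k u))) ->
  ((Pword p u)%:E * X A j p (delta_word q0 u) <= X A j p q0)%E.
Proof.
move=> hp; elim=> [|a u IH] q0 hk.
  by rewrite Pword_nil mul1e.
have nf : ~~ is_final q0 by apply: (hk 0%N).
rewrite (@X_cons _ _ _ A j p q0 hp nf) (bigD1 a) //=.
have h := leeDl ((p a)%:E * X A j p (delta q0 a))
   (sume_ge0 (fun b _ => mule_ge0 (ltW (hp b) : (0 <= (p b)%:E)%E) (@X_ge0 _ _ _ A j p (delta q0 b) hp))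
       (index_enum 'I_s.+1) : (0 <= \sum_(i | i != a) (p i)%:E * X A j p (delta q0 i))%E).
apply: le_trans h.
rewrite Pword_cons EFinM -muleA ?delta_word_cons.
apply: lee_wpmul2l; first by rewrite lee_fin ltW.
apply: IH => k hk'; exact: (hk k.+1).
Qed.

Definition dead s t (A : automaton s t) j (q : state A) : Prop :=
  forall w, delta_word q w \notin final A j.
Arguments dead {s t} A j q.

Definition reach s t (A : automaton s t) (q : state A) : Prop :=
  exists u : word s, delta_word (start A) u = q /\
    forall k, (k < size u)%N -> ~~ is_final (delta_word (start A) (take k u)).
Arguments reach {s t} A q.

Lemma X_dead (R : realType) s t (A : automaton s t) j (p : 'I_s.+1 -> R) q :
  dead A j q -> X A j p q = 0%E.
Proof.
move=> hd; rewrite /X /Plang (_ : Lq A j q = set0) ?esum_set0 //.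
by apply/seteqP; split => // w [hw _]; move: (hd w); rewrite hw.
Qed.

Lemma X_fin (R : realType) s t (A : automaton s t) j (p : 'I_s.+1 -> R) q c :
  (forall i, 0 < p i) -> X A j p (start A) = c%:E -> reach A q ->
  X A j p q \is a fin_num.
Proof.
move=> hp hc [u [<- hk]].
have h := @X_path _ _ _ A j p hp u (start A) hk; rewrite hc in h.
have h0 := @X_ge0 _ _ _ A j p (delta_word (start A) u) hp.
move: h h0; case: (X A j p (delta_word (start A) u)) => // .
by rewrite gt0_muley // lte_fin Pword_gt0.
Qed.

Definition cls s t (A : automaton s t) j (q : state A) : bool :=
  is_final q || `[< dead A j q >] || ~~ `[< reach A q >].
Arguments cls {s t} A j q.

Definition xr (R : realType) s t (A : automaton s t) j (p : 'I_s.+1 -> R) (q : state A) : R :=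
  if `[< reach A q >] then fine (X A j p q) else 0.
Arguments xr {R s t} A j p q.

Definition br s t (A : automaton s t) j (q : state A) : bool :=
  `[< reach A q >] && (q \in final A j).
Arguments br {s t} A j q.

Lemma reach_succ s t (A : automaton s t) (q : state A) a :
  reach A q -> ~~ is_final q -> reach A (delta q a).
Proof.
move=> [u [uq hk]] nf; exists (rcons u a); split.
  by rewrite /delta_word foldl_rcons -/(delta_word _ _) uq.
move=> k; rewrite size_rcons ltnS leq_eqVlt => /orP[/eqP ->|hk'].
  by rewrite -cats1 take_size_cat // uq.
by rewrite -cats1 takel_cat ?hk // ltnW.
Qed.

Lemma sys_cls (R : realType) s t (A : automaton s t) j (p : 'I_s.+1 -> R) q :
  (forall i, 0 < p i) -> cls A j q -> xr A j p q = (br A j q)%:R.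
Proof.
move=> hp; rewrite /cls /xr /br.
case: (asboolP (reach A q)) => hr /=; last by rewrite orbT.
rewrite orbF => /orP[hf|/asboolP hd].
  by rewrite X_final.
have hF : q \notin final A j := hd [::].
by rewrite X_dead //= (negbTE hF).
Qed.

Lemma sys_ncls (R : realType) s t (A : automaton s t) j (p : 'I_s.+1 -> R) q c :
  (forall i, 0 < p i) -> X A j p (start A) = c%:E -> ~~ cls A j q ->
  xr A j p q = \sum_a p a * xr A j p (delta q a).
Proof.
move=> hp hc; rewrite /cls !negb_or negbK => /andP[/andP[nf _] /asboolP hr].
have e a : X A j p (delta q a) = (xr A j p (delta q a))%:E.
  have ha := reach_succ a hr nf.
  by rewrite /xr asboolT // fineK // (@X_fin _ _ _ A j p _ c hp hc ha).
rewrite /xr asboolT // (@X_cons _ _ _ A j p q hp nf).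
under eq_bigr do rewrite e -EFinM.
by rewrite sumEFin.
Qed.

Lemma convex_extreme (R : realType) (I : finType) (p z : I -> R) (c : R) a :
  (forall i, 0 < p i) -> \sum_i p i = 1 -> (forall i, `|z i| <= `|c|) ->
  c = \sum_i p i * z i -> c != 0 -> z a = c.
Proof.
move=> hp h1 hz hc c0.
have hs : \sum_i p i * (c * c - c * z i) = 0.
  rewrite (eq_bigr (fun i => (c * c) * p i - c * (p i * z i))); last first.
    by move=> i _; ring.
  by rewrite sumrB -mulr_sumr -mulr_sumr h1 -hc; ring.
have ge0 i : 0 <= p i * (c * c - c * z i).
  apply: mulr_ge0; first exact: ltW.
  rewrite subr_ge0; apply: le_trans (ler_norm _) _; rewrite normrM.
  apply: le_trans (ler_wpM2l (normr_ge0 c) (hz i)) _.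
  by rewrite -normrM ger0_norm // -expr2 sqr_ge0.
have := @psumr_eq0P _ _ xpredT _ (fun i _ => ge0 i) hs a isT.
move/eqP; rewrite mulf_eq0 (gt_eqF (hp a)) /= subr_eq0 => /eqP.
by move/(mulfI c0).
Qed.

Lemma uniq_zero (R : realType) s t (A : automaton s t) j (p : 'I_s.+1 -> R)
    (y : state A -> R) :
  (forall i, 0 < p i) -> \sum_i p i = 1 ->
  (forall q, cls A j q -> y q = 0) ->
  (forall q, ~~ cls A j q -> y q = \sum_a p a * y (delta q a)) ->
  forall q, y q = 0.
Proof.
move=> hp h1 hc hn.
pose qm := [arg max_(q > start A) `|y q|]%O.
have hmax : forall q, `|y q| <= `|y qm|.
  by rewrite /qm; case: arg_maxP => // q0 _ H q; apply: H.
suff M0 : `|y qm| = 0.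
  by move=> q; apply/eqP; rewrite -normr_eq0 eq_le normr_ge0 andbT -M0 hmax.
apply/eqP; apply/negPn/negP => M0.
have key : forall w r, delta_word r w \in final A j -> `|y r| = `|y qm| -> False.
  elim=> [|a w IH] r hw hr.
    have : cls A j r by rewrite /cls (is_finalP hw).
    by move/hc => yr; move: M0; rewrite -hr yr normr0 eqxx.
  have ncl : ~~ cls A j r.
    by apply/negP => /hc yr; move: M0; rewrite -hr yr normr0 eqxx.
  have yr0 : y r != 0 by rewrite -normr_eq0 hr.
  have hz : forall b, `|y (delta r b)| <= `|y r| by move=> b; rewrite hr hmax.
  have e := @convex_extreme _ _ p (fun b => y (delta r b)) (y r) a hp h1
     hz (hn r ncl) yr0.
  by apply: (IH (delta r a)) => //=; rewrite e.
have ncl : ~~ cls A j qm.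
  by apply/negP => /hc yr; move: M0; rewrite yr normr0 eqxx.
have hd : ~ dead A j qm.
  by move=> hd; move: ncl; rewrite /cls (asboolT hd) orbT.
have [w /negP] := (existsNP _).2 hd.
by rewrite negbK => hw; exact: (key w qm hw erefl).
Qed.

Definition ir (R : realType) : {rmorphism int -> R} := intmul 1.
Definition evf (R : realType) n (p : 'I_n -> R) (g : {mpoly int[n]}) : R := mmap (ir R) p g.
HB.instance Definition _ (R : realType) n (p : 'I_n -> R) :=
  GRing.isAdditive.Build _ _ (evf p) (@mmap_is_additive _ _ _ p (ir R)).
HB.instance Definition _ (R : realType) n (p : 'I_n -> R) :=
  GRing.isMultiplicative.Build _ _ (evf p) (@mmap_is_multiplicative _ _ _ p (ir R)).

Lemma evfE (R : realType) n (p : 'I_n -> R) g : zeval g p = evf p g.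
Proof. reflexivity. Qed.

Lemma evfX (R : realType) n (p : 'I_n -> R) i : evf p 'X_i = p i.
Proof. by rewrite /evf mmapX mmap1U. Qed.

Definition Npoly s t (A : automaton s t) j : 'M[{mpoly int[s.+1]}]_#|state A| :=
  \matrix_(i, k) (if cls A j (enum_val i) then (i == k)%:R
                  else (i == k)%:R - \sum_(a | delta (enum_val i) a == enum_val k) 'X_a).

Definition bpoly s t (A : automaton s t) j : 'cV[{mpoly int[s.+1]}]_#|state A| :=
  \col_i (br A j (enum_val i))%:R.

Lemma sum_delta (R : realType) n (i : 'I_n) (F : 'I_n -> R) :
  \sum_k (i == k)%:R * F k = F i.
Proof.
rewrite (bigD1 i) //= eqxx mul1r big1 ?addr0 // => k ki.
by rewrite eq_sym (negbTE ki) mul0r.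
Qed.

Lemma Nmul (R : realType) s t (A : automaton s t) j (p : 'I_s.+1 -> R)
    (u : 'cV[R]_#|state A|) i :
  (map_mx (evf p) (Npoly A j) *m u) i 0 =
  if cls A j (enum_val i) then u i 0
  else u i 0 - \sum_a p a * u (enum_rank (delta (enum_val i) a)) 0.
Proof.
rewrite mxE.
under eq_bigr do rewrite !mxE.
case: ifPn => hc.
  under eq_bigr do rewrite rmorph_nat.
  exact: sum_delta.
under eq_bigr do rewrite rmorphB rmorph_nat rmorph_sum mulrBl.
rewrite sumrB sum_delta; congr (_ - _).
under eq_bigr do rewrite mulr_suml big_mkcond /=.
rewrite exchange_big /=; apply: eq_bigr => a _.
rewrite (bigD1 (enum_rank (delta (enum_val i) a))) //= enum_rankK eqxx evfX.
rewrite big1 ?addr0 // => k hk; case: ifPn => // /eqP e.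
by move: hk; rewrite e enum_valK eqxx.
Qed.

Theorem proposition2p8 (R : realType) (s t : nat) (hs : (1 <= s)%N) (ht : (1 <= t)%N)
    (f : ('I_s.+1 -> R) -> 'I_t.+1 -> R)
    (hf : forall p, in_simplex p -> in_simplex (f p))
    (hA : exists A : automaton s t, aut_simulates A f) :
  forall j : 'I_t.+1, exists g h : mpoly.mpoly s.+1 int,
    forall p, in_simplex p -> zeval h p != 0 /\ f p j = zeval g p / zeval h p.
Proof.
move=> j; case: hA => A [_ _ hL].
pose i0 := enum_rank (start A).
exists ((\adj (Npoly A j) *m bpoly A j) i0 0), (\det (Npoly A j)).
move=> p hsp.
have hp : forall i, 0 < p i by move=> i; case: hsp => /(_ i) /andP[].
have h1 : \sum_i p i = 1 by case: hsp.
have hc : X A j p (start A) = (f p j)%:E by exact: hL.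
pose N := map_mx (evf p) (Npoly A j).
pose xv : 'cV[R]_#|state A| := \col_k xr A j p (enum_val k).
have hNx : N *m xv = map_mx (evf p) (bpoly A j).
  apply/matrixP => i z; rewrite ord1 Nmul !mxE rmorph_nat.
  case: ifPn => hcl.
    by rewrite (sys_cls hp hcl).
  rewrite (sys_ncls hp hc hcl).
  have -> : \sum_a p a * xv (enum_rank (delta (enum_val i) a)) 0 =
            \sum_a p a * xr A j p (delta (enum_val i) a).
    by apply: eq_bigr => a _; rewrite /xv mxE enum_rankK.
  rewrite subrr /br.
  have : ~~ (enum_val i \in final A j).
    by apply: contra hcl => /is_finalP h; rewrite /cls h.
  by move/negbTE => ->; rewrite andbF.
have hdet : \det N != 0.
  apply/negP => /eqP h0.
  have := h0; rewrite -det_tr => /eqP/det0P [v v0 hv].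
  have hNv : N *m v^T = 0 by rewrite -[N]trmxK -trmx_mul hv trmx0.
  pose y (q : state A) := v 0 (enum_rank q).
  have hy : forall q, y q = 0.
    apply: (@uniq_zero _ _ _ A j p y hp h1).
    - move=> q hcl; have := congr1 (fun M : 'cV[R]_#|state A| => M (enum_rank q) 0) hNv.
      by rewrite Nmul enum_rankK hcl !mxE.
    - move=> q hcl; have := congr1 (fun M : 'cV[R]_#|state A| => M (enum_rank q) 0) hNv.
      rewrite Nmul enum_rankK (negbTE hcl) !mxE.
      under eq_bigr do rewrite mxE.
      by move/eqP; rewrite subr_eq0 => /eqP.
  move/negP: v0; apply; apply/eqP/rowP => i.
  by rewrite mxE -(hy (enum_val i)) /y enum_valK.
have hxs : xr A j p (start A) = f p j.
  rewrite /xr asboolT ?hc //; exists [::]; split => // k.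
have hg : zeval ((\adj (Npoly A j) *m bpoly A j) i0 0) p = \det N * f p j.
  transitivity ((map_mx (evf p) (\adj (Npoly A j) *m bpoly A j)) i0 0).
    by rewrite [RHS]mxE evfE.
  rewrite map_mxM map_mx_adj -hNx mulmxA mul_adj_mx mul_scalar_mx mxE.
  by rewrite mxE /i0 enum_rankK hxs.
have hh : zeval (\det (Npoly A j)) p = \det N by rewrite evfE det_map_mx.
rewrite hg hh; split => //.
by field.
Qed.
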